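(* There exists a dynamic network congestion game with a Nash equilibrium $\pi$ such that for every blind Nash equilibrium $\pi'$ of that game, the social cost of $\pi$ is strictly smaller than the social cost of $\pi'$.
   Context: Let $\mathcal F$ be the set of non-decreasing piecewise-affine functions $\mathbb N\to\mathbb N$ with finitely many pieces. An arena is $\mathcal A=(V,E,\mathsf{src},\mathsf{tgt})$ with $V$ finite, $E$ a partial function $V\times V\to\mathcal F$ (edge $e$ has cost function $\ell_e$); $\mathsf{tgt}$ has only a self-loop of constant cost $0$ and is reachable from every state. A dynamic NCG $(\mathcal A,n)$ has players $[n]$, all starting in $\mathsf{src}$; in each step each player simultaneously picks an edge $e_i$ leaving their current state, moves along it and pays $\ell_{e_i}(u_i)$ with $u_i$ the number of players choosing $e_i$ in that step. Strategies map finite histories to edges leaving the player's current state; $\mathrm{cost}_i(\sigma)$ is player $i$'s total payment along the outcome of profile $\sigma$ until reaching $\mathsf{tgt}$, and the social cost is $\sum_i\mathrm{cost}_i(\sigma)$. A Nash equilibrium is a profile in which no player can lower their cost by unilaterally changing strategy. A strategy is blind if it depends only on the states visited by the player itself (follows a fixed path of $\mathcal A$); a blind Nash equilibrium is a blind profile where no player can lower their cost by switching to another blind strategy. *)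

(* Defs.v *)
From HB Require Import structures.
From mathcomp Require Import all_boot all_order all_algebra.
From Stdlib Require Import ClassicalEpsilon.
Set Implicit Arguments. Unset Strict Implicit. Unset Printing Implicit Defensive.
Import GRing.Theory Num.Theory.

Definition nondecreasing_fun (f : nat -> nat) : Prop :=
  forall x y, x <= y -> f x <= f y.

Definition affine_on (f : nat -> nat) (P : pred nat) : Prop :=
  exists a b : int, forall x, P x -> Posz (f x) = (a * Posz x + b)%R.

(* finitely many pieces: the breakpoints s cut N into the intervals
   { x | count (<= x) s = j }, j = 0 .. size s; f is affine on each of them *)
Definition piecewise_affine (f : nat -> nat) : Prop :=
  exists s : seq nat, forall j : nat,
    affine_on f (fun x => count (fun t => t <= x) s == j).

Definition cost_fun (f : nat -> nat) : Prop :=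
  nondecreasing_fun f /\ piecewise_affine f.

Record arena := Arena {
  state : finType;
  edge : state -> state -> option (nat -> nat);
  src : state;
  tgt : state }.
Arguments edge : clear implicits.

Definition is_edge (A : arena) (u v : state A) : bool := isSome (edge A u v).
Arguments is_edge : clear implicits.

Definition wf_arena (A : arena) : Prop :=
  [/\ forall u v l, edge A u v = Some l -> cost_fun l,
      forall v, is_edge A (tgt A) v -> v = tgt A,
      exists l, edge A (tgt A) (tgt A) = Some l /\ forall u, l u = 0
    &
      forall v, connect (is_edge A) v (tgt A)].

(* ---------- extended naturals (None = +infinity) ---------- *)
Definition enat := option nat.
Definition ele (a b : enat) : bool :=
  match a, b with
  | _, None => true
  | None, Some _ => false
  | Some x, Some y => x <= y
  end.
Definition elt (a b : enat) : bool := ~~ ele b a.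
Definition eadd (a b : enat) : enat :=
  match a, b with Some x, Some y => Some (x + y) | _, _ => None end.

Definition esup (a : nat -> nat) : enat :=
  match excluded_middle_informative
          (exists v, (forall N, a N <= v) /\ exists N, a N = v) with
  | left H => Some (proj1_sig (constructive_indefinite_description _ H))
  | right _ => None
  end.

Section Game.
Variables (A : arena) (n : nat).

Definition config := {ffun 'I_n -> state A}.
Definition init_config : config := [ffun _ => src A].

(* a history is the sequence of configurations reached after the initial one *)
Definition history := seq config.
Definition cur (h : history) : config := last init_config h.

(* a strategy maps a history to the next state (the edge taken is (cur i, next)) *)
Definition strategy := history -> state A.
Definition profile := 'I_n -> strategy.

Definition valid_strategy (i : 'I_n) (s : strategy) : Prop :=
  forall h : history, is_edge A (cur h i) (s h).
Definition valid_profile (sigma : profile) : Prop :=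
  forall i, valid_strategy i (sigma i).

Definition next (sigma : profile) (h : history) : config := [ffun i => sigma i h].

Fixpoint hist (sigma : profile) (k : nat) : history :=
  match k with
  | 0 => [::]
  | k'.+1 => rcons (hist sigma k') (next sigma (hist sigma k'))
  end.

Definition load (sigma : profile) (k : nat) (i : 'I_n) : nat :=
  let h := hist sigma k in
  #|[set j : 'I_n | (cur h j == cur h i) && (next sigma h j == next sigma h i)]|.

Definition pay (sigma : profile) (k : nat) (i : 'I_n) : nat :=
  let h := hist sigma k in
  match edge A (cur h i) (next sigma h i) with
  | Some l => l (load sigma k i)
  | None => 0
  end.

(* total payment (tgt has only a 0-cost self-loop, so summing over all steps
   is the payment until reaching tgt); +infinity if unbounded *)
Definition cost (sigma : profile) (i : 'I_n) : enat :=
  esup (fun N => \sum_(k < N) pay sigma k i).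

Definition social_cost (sigma : profile) : enat :=
  \big[eadd/Some 0]_(i < n) cost sigma i.

Definition upd (sigma : profile) (i : 'I_n) (s : strategy) : profile :=
  fun j => if j == i then s else sigma j.

Definition nash (sigma : profile) : Prop :=
  valid_profile sigma /\
  forall i s, valid_strategy i s -> ele (cost sigma i) (cost (upd sigma i s) i).

Definition blind_strat (i : 'I_n) (b : seq (state A) -> state A) : strategy :=
  fun h : history => b [seq (c : config) i | c <- h].

Definition blind_profile (sigma : profile) : Prop :=
  forall i, exists b, forall h, sigma i h = blind_strat i b h.

Definition blind_nash (sigma : profile) : Prop :=
  [/\ valid_profile sigma, blind_profile sigma &
      forall i b, valid_strategy i (blind_strat i b) ->
        ele (cost sigma i) (cost (upd sigma i (blind_strat i b)) i)].

End Game.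

(* Main.v *)
From HB Require Import structures.
From mathcomp Require Import all_boot all_order all_algebra zify.
From Stdlib Require Import ClassicalEpsilon.
Require Import Defs.
Set Implicit Arguments. Unset Strict Implicit. Unset Printing Implicit Defensive.


Inductive St := S | Aa | Bb | Bp | Cc | Cp | M | T.
Definition st2n (x : St) : nat := match x with S=>0 | Aa=>1 | Bb=>2 | Bp=>3 | Cc=>4 | Cp=>5 | M=>6 | T=>7 end.
Definition n2st (o : nat) : St := match o with 0=>S | 1=>Aa | 2=>Bb | 3=>Bp | 4=>Cc | 5=>Cp | 6=>M | _=>T end.
Lemma stK : cancel st2n n2st. Proof. by case. Qed.
Definition st_eqb (x y : St) := st2n x == st2n y.
Lemma st_eqP : Equality.axiom st_eqb.
Proof. move=> x y; apply: (iffP eqP) => [/(can_inj stK)|->] //. Qed.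
HB.instance Definition _ := hasDecEq.Build St st_eqP.
HB.instance Definition _ := CanIsCountable stK.
Definition st_enum := [:: S; Aa; Bb; Bp; Cc; Cp; M; T].
Lemma st_enum_uniq : uniq st_enum. Proof. by []. Qed.
Lemma mem_st_enum x : x \in st_enum. Proof. by case: x. Qed.
HB.instance Definition _ := isFinite.Build St (Finite.uniq_enumP st_enum_uniq mem_st_enum).

Definition cst (c : nat) : nat -> nat := fun _ => c.
Definition lin (a : nat) : nat -> nat := fun u => a * (u - 1).

Definition ed (u v : St) : option (nat -> nat) :=
  match u, v with
  | S, Aa => Some (cst 3)
  | S, Bb => Some (cst 0)
  | S, Cc => Some (lin 3)
  | Aa, T => Some (cst 0)
  | Bb, Bp => Some (cst 0)
  | Bp, M => Some (lin 1)
  | Cc, Cp => Some (cst 0)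
  | Cc, Bp => Some (cst 1)
  | Cp, M => Some (cst 0)
  | M, T => Some (lin 2)
  | T, T => Some (cst 0)
  | _, _ => None end.

Definition Ar : arena := Arena ed S T.


Lemma conn (v : St) : connect (is_edge Ar) v T.
Proof.
apply/connectP; case: v.
- by exists [:: Aa; T].
- by exists [:: T].
- by exists [:: Bp; M; T].
- by exists [:: M; T].
- by exists [:: Cp; M; T].
- by exists [:: M; T].
- by exists [:: T].
- by exists [::].
Qed.


Section Gen.
Variables (A : arena) (n : nat).
Implicit Types (sg : profile A n).

Definition pos sg k i := cur (hist sg k) i.

Lemma curS sg k : cur (hist sg k.+1) = next sg (hist sg k).
Proof. by rewrite /cur /= last_rcons. Qed.

Lemma pos0 sg i : pos sg 0 i = src A.
Proof. by rewrite /pos /cur /= ffunE. Qed.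

Lemma pos_next sg k i : pos sg k.+1 i = sg i (hist sg k).
Proof. by rewrite /pos curS ffunE. Qed.

Lemma pay_eq sg k i : pay sg k i =
  match edge A (pos sg k i) (pos sg k.+1 i) with
  | Some l => l #|[set j | (pos sg k j == pos sg k i) && (pos sg k.+1 j == pos sg k.+1 i)]|
  | None => 0 end.
Proof. by rewrite /pay /load /pos curS. Qed.

Lemma esup_eq (a : nat -> nat) v : (forall N, a N <= v) -> (exists N, a N = v) -> esup a = Some v.
Proof.
move=> Hb [N0 HN0]; rewrite /esup; case: excluded_middle_informative => [H|H]; last first.
  by exfalso; apply: H; exists v; split => //; exists N0.
congr Some; case: (constructive_indefinite_description _ H) => w [Hw [N HN]] /=.
apply/eqP; rewrite eqn_leq -{1}HN Hb /= -HN0; exact: Hw.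
Qed.

Lemma esup_ge (a : nat -> nat) N : ele (Some (a N)) (esup a).
Proof.
rewrite /esup; case: excluded_middle_informative => // H.
by case: (constructive_indefinite_description _ H) => w [Hw _] /=.
Qed.

Lemma cost_fin sg i (F : nat -> nat) : (forall k, pay sg k i = F k) ->
  (forall k, 4 <= k -> F k = 0) -> cost sg i = Some (F 0 + F 1 + F 2 + F 3).
Proof.
move=> HF H0; rewrite /cost.
have E N : \sum_(k < N) pay sg k i = \sum_(k < N) F k by apply: eq_bigr => k _.
have E4 : \sum_(k < 4) F k = F 0 + F 1 + F 2 + F 3.
  by rewrite !big_ord_recr big_ord0 /= add0n.
apply: esup_eq; last by exists 4; rewrite E E4.
move=> N; rewrite E -E4; case: (leqP N 4) => HN.
  by rewrite -(subnKC HN) big_split_ord /= leq_addr.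
have Z : \sum_(k < N - 4) F (4 + k) = 0.
  by rewrite big1 // => k _; apply: H0; rewrite leq_addr.
by rewrite -(subnKC (ltnW HN)) big_split_ord /= Z addn0.
Qed.

Lemma blind_pos sg sg' j (b : seq (state A) -> state A) :
  (forall h, sg j h = b [seq (c : config A n) j | c <- h]) -> (forall h, sg' j h = b [seq (c : config A n) j | c <- h]) ->
  forall k, pos sg k j = pos sg' k j.
Proof.
move=> H H'.
have E k : [seq (c : config A n) j | c <- hist sg k] = [seq (c : config A n) j | c <- hist sg' k].
  by elim: k => //= k IH; rewrite !map_rcons /next !ffunE H H' IH.
by move=> k; rewrite /pos /cur -!(last_map (fun c : config A n => c j)) E.
Qed.

Lemma ml_pos sg i (nx : state A -> state A) : (forall h, sg i h = nx (cur h i)) ->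
  forall k, pos sg k i = iter k nx (src A).
Proof.
move=> H; elim => [|k IH]; first by rewrite pos0.
by rewrite pos_next H -/(pos sg k i) IH.
Qed.

Lemma valid_upd sg i s : valid_profile sg -> valid_strategy i s -> valid_profile (upd sg i s).
Proof. by move=> Hv Hs j; rewrite /upd; case: (j =P i) => [->|_]. Qed.

Lemma valid_edge sg i k : valid_profile sg -> is_edge A (pos sg k i) (pos sg k.+1 i).
Proof. by move=> Hv; rewrite pos_next; apply: Hv. Qed.

Lemma last_cur (h : history A n) i : last (src A) [seq (c : config A n) i | c <- h] = cur h i.
Proof. by rewrite /cur -(last_map (fun c : config A n => c i)) ffunE. Qed.

End Gen.


Definition o0 : 'I_2 := ord0.
Definition o1 : 'I_2 := @Ordinal 2 1 isT.

Lemma card2 (P : pred 'I_2) : #|[set j | P j]| = P o0 + P o1.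
Proof.
rewrite -sum1_card big_mkcond !big_ord_recl big_ord0 /= !inE addn0.
have -> : lift ord0 (ord0 : 'I_1) = o1 by apply: val_inj.
by case: (P o0); case: (P o1).
Qed.

Definition stepc (x y : St) (u : nat) := match ed x y with Some l => l u | None => 0 end.
Definition sc (p q : seq St) k := stepc (nth T p k) (nth T p k.+1)
   (1 + ((nth T q k == nth T p k) && (nth T q k.+1 == nth T p k.+1))).
Definition cfn p q := sc p q 0 + sc p q 1 + sc p q 2 + sc p q 3.

Definition pH := [:: S; Aa; T; T; T].
Definition pD := [:: S; Bb; Bp; M; T].
Definition pC := [:: S; Cc; Cp; M; T].
Definition pE := [:: S; Cc; Bp; M; T].
Definition paths := [:: pH; pD; pC; pE].

Lemma pathT p k : p \in paths -> 4 <= k -> nth T p k = T.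
Proof.
case: k => [|[|[|[|k]]]] // Hp _.
by move: Hp; rewrite !inE; case/or4P => /eqP ->; case: k => [|k]; rewrite /= ?nth_nil.
Qed.

Lemma cost2 (sg : profile Ar 2) (p q : seq St) :
  (forall k, pos sg k o0 = nth T p k) -> (forall k, pos sg k o1 = nth T q k) ->
  p \in paths -> q \in paths ->
  cost sg o0 = Some (cfn p q) /\ cost sg o1 = Some (cfn q p).
Proof.
move=> Hp Hq Pp Pq; split; apply: cost_fin.
- by move=> k; rewrite pay_eq card2 !Hp !Hq !eqxx.
- by move=> k Hk; rewrite /sc !pathT // (leq_trans Hk).
- by move=> k; rewrite pay_eq card2 !Hp !Hq !eqxx addnC.
- by move=> k Hk; rewrite /sc !pathT // (leq_trans Hk).
Qed.

Definition rk (u : St) := match u with S => 4 | Aa => 1 | Bb => 3 | Bp => 2 | Cc => 3 | Cp => 2 | M => 1 | T => 0 end.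
Lemma rk_edge u v : is_edge Ar u v -> rk v <= rk u - 1.
Proof. by case: u; case: v. Qed.
Lemma rk0 u : rk u = 0 -> u = T.
Proof. by case: u. Qed.

Lemma path_cases (sg : profile Ar 2) i : valid_profile sg ->
  exists2 p, p \in paths & forall k, pos sg k i = nth T p k.
Proof.
move=> Hv.
have E k := valid_edge i k Hv.
have R k : rk (pos sg k i) <= 4 - k.
  elim: k => [|k IH]; first by rewrite pos0.
  have := rk_edge (E k); lia.
have HT k : 4 <= k -> pos sg k i = T.
  by move=> Hk; apply: rk0; have := R k; lia.
have P0 : pos sg 0 i = S by rewrite pos0.
exists [:: S; pos sg 1 i; pos sg 2 i; pos sg 3 i; T].
  have E0 := E 0; have E1 := E 1; have E2 := E 2; have E3 := E 3.
  rewrite P0 in E0; rewrite (HT 4) // in E3.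
  move: E0 E1 E2 E3.
  by case: (pos sg 1 i) => //; case: (pos sg 2 i) => //; case: (pos sg 3 i).
case => [|[|[|[|k]]]] /=; rewrite ?P0 // HT //.
by case: k => [|k] /=; rewrite ?nth_nil.
Qed.


Definition nxt (f : St) (u : St) : St :=
  match u with S => f | Aa => T | Bb => Bp | Bp => M | Cc => Cp | Cp => M | M => T | T => T end.
Definition nx0 (u o : St) : St := if (u == Cc) && (o == Bb) then Bp else nxt Cc u.

Lemma nxt_edge f u : f \in [:: Aa; Bb; Cc] -> is_edge Ar u (nxt f u).
Proof. by rewrite !inE; case/or3P => /eqP ->; case: u. Qed.
Lemma nx0_edge u o : is_edge Ar u (nx0 u o).
Proof. by case: u; case: o. Qed.

Definition sig0 : strategy Ar 2 := fun h => nx0 (cur h o0) (cur h o1).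
Definition sig1 : strategy Ar 2 := fun h => nxt Aa (cur h o1).
Definition piS : profile Ar 2 := fun i => if i == o0 then sig0 else sig1.

Lemma iter_path f P : f \in [:: Aa; Bb; Cc] -> P = [:: S; f; nxt f f; nxt f (nxt f f); T] ->
  forall k, iter k (nxt f) S = nth T P k.
Proof.
move=> Hf ->.
have HT k : iter k (nxt f) T = T by elim: k => //= k ->.
have I4 : iter 4 (nxt f) S = T by move: Hf; rewrite !inE; case/or3P => /eqP ->.
have H4 k : iter k.+4 (nxt f) S = T by rewrite -addn4 iterD I4 HT.
case => [|[|[|[|k]]]]; [reflexivity..|]; rewrite H4; case: k => [|k] /=; rewrite ?nth_nil; reflexivity.
Qed.

Definition pi0 (q : seq St) := if nth T q 1 == Bb then pE else pC.

Lemma pi0_in q : pi0 q \in paths.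
Proof. by rewrite /pi0; case: ifP. Qed.

Lemma p0_traj q k : q \in paths -> nx0 (nth T (pi0 q) k) (nth T q k) = nth T (pi0 q) k.+1.
Proof.
move=> Hq; case: (leqP 4 k) => Hk.
  by rewrite !pathT ?pi0_in // (leq_trans Hk).
move: Hq; rewrite !inE; case/or4P => /eqP ->;
  by case: k Hk => [|[|[|[|k]]]].
Qed.

Lemma p0_pos (sg : profile Ar 2) q : (forall h, sg o0 h = sig0 h) -> q \in paths ->
  (forall k, pos sg k o1 = nth T q k) -> forall k, pos sg k o0 = nth T (pi0 q) k.
Proof.
move=> H Pq Hq; elim => [|k IH]; first by rewrite pos0 /pi0; case: ifP.
by rewrite pos_next H /sig0 -/(pos sg k o0) -/(pos sg k o1) IH Hq p0_traj.
Qed.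

Lemma piS_pos1 k : pos piS k o1 = nth T pH k.
Proof.
rewrite (@ml_pos _ _ piS o1 (nxt Aa)) //; first exact: iter_path.
Qed.

Lemma piS_pos0 k : pos piS k o0 = nth T pC k.
Proof. by rewrite (@p0_pos piS pH) //; exact: piS_pos1. Qed.

Lemma o2 (i : 'I_2) : (i = o0) \/ (i = o1).
Proof. by case: i => [[|[|//]] Hi]; [left|right]; apply: val_inj. Qed.

Lemma piS_valid : valid_profile piS.
Proof.
move=> i h; case: (o2 i) => ->; rewrite /piS /=; [exact: nx0_edge | exact: nxt_edge].
Qed.

Lemma piS_costs : cost piS o0 = Some 0 /\ cost piS o1 = Some 3.
Proof. exact: (cost2 piS_pos0 piS_pos1). Qed.

Lemma fin_pi q : q \in paths -> 3 <= cfn q (pi0 q).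
Proof. by rewrite !inE; case/or4P => /eqP ->. Qed.


Lemma nash_piS : nash piS.
Proof.
split; first exact: piS_valid.
have [c0 c1] := piS_costs.
move=> i s Hs; case: (o2 i) => Ei; subst i; first by rewrite c0; case: (cost _ _).
have Hv : valid_profile (upd piS o1 s) by apply: valid_upd => //; exact: piS_valid.
have [q Pq Hq] := path_cases o1 Hv.
have H0 : forall k, pos (upd piS o1 s) k o0 = nth T (pi0 q) k by apply: p0_pos.
have [_ ->] := cost2 H0 Hq (pi0_in q) Pq.
by rewrite c1 /=; apply: fin_pi.
Qed.

Definition bf (f : St) : seq (state Ar) -> state Ar := fun ss => nxt f (last (src Ar) ss).

Lemma bf_valid (i : 'I_2) f : f \in [:: Aa; Bb; Cc] -> @valid_strategy Ar 2 i (blind_strat i (bf f)).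
Proof. by move=> Hf h; rewrite /blind_strat /bf last_cur; apply: nxt_edge. Qed.

Definition pathf (f : St) := [:: S; f; nxt f f; nxt f (nxt f f); T].

Lemma pathf_in f : f \in [:: Aa; Bb; Cc] -> pathf f \in paths.
Proof. by rewrite !inE; case/or3P => /eqP ->. Qed.

Lemma dev_bound (pi' : profile Ar 2) i j f p q : i != j ->
  blind_nash pi' -> f \in [:: Aa; Bb; Cc] ->
  p \in paths -> q \in paths ->
  (forall k, pos pi' k i = nth T p k) -> (forall k, pos pi' k j = nth T q k) ->
  cost pi' i = Some (cfn p q) ->
  (forall (sg : profile Ar 2) p' q', (forall k, pos sg k i = nth T p' k) ->
      (forall k, pos sg k j = nth T q' k) -> p' \in paths -> q' \in paths ->
      cost sg i = Some (cfn p' q')) ->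
  cfn p q <= cfn (pathf f) q.
Proof.
move=> Hij [Hv Hb Hne] Hf Pp Pq Hp Hq Hc Hcost.
have [bj Hbj] := Hb j.
have Hij' : j != i by rewrite eq_sym.
set dev := upd pi' i (blind_strat i (bf f)).
have Hs := bf_valid i Hf.
have Hdi k : pos dev k i = nth T (pathf f) k.
  rewrite (@ml_pos _ _ dev i (nxt f)); first exact: iter_path.
  by move=> h; rewrite /dev /upd eqxx /blind_strat /bf last_cur.
have Hdj k : pos dev k j = nth T q k.
  rewrite -Hq; apply: (@blind_pos _ _ dev pi' j bj) => h.
    by rewrite /dev /upd (negbTE (Hij' : j != i)) Hbj.
  by rewrite Hbj.
have := Hne i (bf f) Hs; rewrite Hc (Hcost dev _ _ Hdi Hdj (pathf_in Hf) Pq) //.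
Qed.

Lemma fin_blind p q : p \in paths -> q \in paths ->
  cfn p q <= cfn pD q -> cfn p q <= cfn pC q -> cfn q p <= cfn pD p -> cfn q p <= cfn pC p ->
  3 < cfn p q + cfn q p.
Proof. by rewrite !inE; case/or4P => /eqP ->; case/or4P => /eqP ->. Qed.

Lemma cost_o0 (sg : profile Ar 2) p' q' : (forall k, pos sg k o0 = nth T p' k) ->
  (forall k, pos sg k o1 = nth T q' k) -> p' \in paths -> q' \in paths ->
  cost sg o0 = Some (cfn p' q').
Proof. by move=> H0 H1 P0 P1; case: (cost2 H0 H1 P0 P1). Qed.

Lemma cost_o1 (sg : profile Ar 2) p' q' : (forall k, pos sg k o1 = nth T p' k) ->
  (forall k, pos sg k o0 = nth T q' k) -> p' \in paths -> q' \in paths ->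
  cost sg o1 = Some (cfn p' q').
Proof. by move=> H1 H0 P1 P0; case: (cost2 H0 H1 P0 P1). Qed.

Lemma blind_main (pi' : profile Ar 2) : blind_nash pi' -> elt (social_cost piS) (social_cost pi').
Proof.
move=> Hn; have Hn' := Hn; case: Hn' => Hv _ _.
have [p Pp Hp] := path_cases o0 Hv.
have [q Pq Hq] := path_cases o1 Hv.
have c0 := cost_o0 Hp Hq Pp Pq.
have c1 := cost_o1 Hq Hp Pq Pp.
have [s0 s1] := piS_costs.
have HD : Bb \in [:: Aa; Bb; Cc] by [].
have HC : Cc \in [:: Aa; Bb; Cc] by [].
have d0D := dev_bound (isT : o0 != o1) Hn HD Pp Pq Hp Hq c0 (@cost_o0).
have d0C := dev_bound (isT : o0 != o1) Hn HC Pp Pq Hp Hq c0 (@cost_o0).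
have d1D := dev_bound (isT : o1 != o0) Hn HD Pq Pp Hq Hp c1 (@cost_o1).
have d1C := dev_bound (isT : o1 != o0) Hn HC Pq Pp Hq Hp c1 (@cost_o1).
have := fin_blind Pp Pq d0D d0C d1D d1C.
rewrite /social_cost !big_ord_recl !big_ord0.
have -> : lift ord0 (ord0 : 'I_1) = o1 by apply: val_inj.
rewrite -/o0 s0 s1 c0 c1 /= addn0.
by rewrite /elt /= addn0 -ltnNge.
Qed.

Lemma cst_cf c : cost_fun (cst c).
Proof.
split; first by [].
exists [::] => j; exists 0%R, (Posz c) => x _.
by rewrite GRing.mul0r GRing.add0r.
Qed.

Lemma lin_cf a : cost_fun (lin a).
Proof.
split; first by move=> x y Hxy; rewrite /lin leq_mul2l leq_sub2r ?orbT.
exists [:: 1] => -[|[|j]].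
- exists 0%R, 0%R => x /=; rewrite addn0; case: x => // _.
  by rewrite /lin muln0.
- exists (Posz a), (- Posz a)%R => x /=; rewrite addn0 => /eqP Hx.
  rewrite /lin; have H1 : 1 <= x by case: (1 <= x) Hx.
  nia.
- exists 0%R, 0%R => x /=; rewrite addn0; by case: (1 <= x).
Qed.

Lemma wf_Ar : wf_arena Ar.
Proof.
split.
- move=> u v l; case: u; case: v => //= -[<-]; solve [exact: cst_cf | exact: lin_cf].
- by case.
- by exists (cst 0).
- exact: conn.
Qed.

Theorem mainTheorem4 :
  exists (A : arena) (n : nat) (pi : profile A n),
    wf_arena A /\ nash pi /\
    forall pi' : profile A n, blind_nash pi' -> elt (social_cost pi) (social_cost pi').
Proof.
exists Ar, 2, piS; split; first exact: wf_Ar.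
split; first exact: nash_piS.
exact: blind_main.
Qed.
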